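(* For any $n,L\geq 1$ and any random $n\times n$ matrix $X$ with entries in $\mathbb{Z}$, $$\mathbb{P}\Bigl(\exists\, Q\in\textstyle\bigcup_{\ell=2}^{L}\mathbb{O}_n(\ell,\mathbb{Q}):\ Q^{T}XQ\in\mathbb{Z}^{n\times n}\Bigr)\leq\frac{1}{2^n n!}\sum_{\ell=2}^{L}\mathbb{E}[N_n(\ell)].$$
   Context: The level of a rational matrix $Q$ is the least integer $\ell\geq 1$ with $\ell Q$ having integer entries. $\mathbb{O}_n(\ell,\mathbb{Q})$ denotes the set of all rational orthogonal $n\times n$ matrices with level $\ell$. For $X\in\mathbb{Z}^{n\times n}$, $N_n(\ell)=\#\{Q\in\mathbb{O}_n(\ell,\mathbb{Q}): Q^{T}XQ\in\mathbb{Z}^{n\times n}\}$. *)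

(* Defs.v *)
From HB Require Import structures.
From mathcomp Require Import all_boot all_order all_algebra.
From mathcomp Require Import all_classical all_reals all_analysis.
Import Order.TTheory GRing.Theory Num.Theory.
Local Open Scope classical_set_scope.
Local Open Scope ring_scope.

Definition int_mx {m k : nat} (A : 'M[rat]_(m, k)) : Prop :=
  forall i j, A i j \is a Num.int.

Definition rat_orthogonal {n : nat} (Q : 'M[rat]_n) : Prop :=
  Q^T *m Q = 1%:M.

Definition has_level {n : nat} (Q : 'M[rat]_n) (l : nat) : Prop :=
  (1 <= l)%N /\ int_mx (l%:R *: Q) /\
  (forall k : nat, (1 <= k)%N -> (k < l)%N -> ~ int_mx (k%:R *: Q)).

Definition On (n l : nat) : set 'M[rat]_n :=
  [set Q | rat_orthogonal Q /\ has_level Q l].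

Definition ratmx {n : nat} (X : 'M[int]_n) : 'M[rat]_n := map_mx (fun z : int => z%:~R) X.

Definition Nn (R : realType) (n l : nat) (X : 'M[int]_n) : \bar R :=
  \esum_(Q in [set Q | On n l Q /\ int_mx (Q^T *m ratmx X *m Q)]) 1%E.

(* Main.v *)
Require Import Defs.
From HB Require Import structures.
From mathcomp Require Import all_boot all_order all_algebra.
From mathcomp Require Import all_classical all_reals all_analysis.
From mathcomp Require Import measurable_realfun.
From mathcomp Require Import fingroup perm.
From mathcomp Require Import zify.
Import Order.TTheory GRing.Theory Num.Theory.
Local Open Scope classical_set_scope.
Local Open Scope ring_scope.

Lemma int_mxM m k p (A : 'M[rat]_(m,k)) (B : 'M[rat]_(k,p)) :
  int_mx A -> int_mx B -> int_mx (A *m B).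
Proof. by move=> hA hB i j; rewrite mxE; apply: rpred_sum => l _; apply: rpredM. Qed.

Lemma int_mx_tr m k (A : 'M[rat]_(m,k)) : int_mx A -> int_mx A^T.
Proof. by move=> h i j; rewrite mxE. Qed.

Definition spT n : finType := prod {ffun 'I_n -> bool} {perm 'I_n}.

Definition spmx n (p : spT n) : 'M[rat]_n :=
  diag_mx (\row_i ((-1) ^+ p.1 i)) *m perm_mx p.2.
Arguments spmx {n} p.

Lemma spmxE n (p : spT n) (i j : 'I_n) : spmx p i j = (-1) ^+ p.1 i * ((p.2 i == j)%:R).
Proof. by rewrite /spmx mul_diag_mx !mxE. Qed.

Lemma int_spmx n (p : spT n) : int_mx (spmx p).
Proof.
move=> i j; rewrite spmxE; apply: rpredM; first by apply: rpredX; apply: rpredN; apply: rpred1.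
exact: rpred_nat.
Qed.

Lemma spmx_orth n (p : spT n) : (spmx p)^T *m spmx p = 1%:M.
Proof.
rewrite /spmx trmx_mul tr_diag_mx tr_perm_mx.
rewrite -mulmxA (mulmxA (diag_mx _)).
have -> : diag_mx (\row_i ((-1) ^+ p.1 i)) *m diag_mx (\row_i ((-1) ^+ p.1 i)) = 1%:M :> 'M[rat]_n.
  apply/matrixP => i j; rewrite mul_diag_mx !mxE.
  by case: (i == j); rewrite ?mulr1n ?mulr0n ?mulr0 // -expr2 sqrr_sign.
by rewrite mul1mx -perm_mxM mulVg perm_mx1.
Qed.

Lemma spmx_inj n : injective (@spmx n).
Proof.
move=> [e1 s1] [e2 s2] /matrixP H.
have hs : forall i, s1 i = s2 i.
  move=> i; have := H i (s1 i); rewrite !spmxE /= eqxx mulr1.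
  case: eqP => // _; rewrite mulr0 => /eqP; by rewrite signr_eq0.
have he : forall i, e1 i = e2 i.
  move=> i; have := H i (s1 i); rewrite !spmxE /= hs eqxx !mulr1.
  exact: signr_inj.
congr pair; [apply/ffunP => i | apply/permP => i]; exact: he || exact: hs.
Qed.

Lemma card_sp n : #|spT n| = (2 ^ n * n`!)%N.
Proof. by rewrite card_prod card_ffun card_bool card_ord card_Sn. Qed.

Lemma On_sp n l (Q : 'M[rat]_n) (p : spT n) : On n l Q -> On n l (Q *m spmx p).
Proof.
move=> [hQ [l1 [hl hmin]]]; split; [|split; [done|split]].
- rewrite /rat_orthogonal trmx_mul -mulmxA (mulmxA Q^T) hQ mul1mx; exact: spmx_orth.
- rewrite scalemxAl; apply: int_mxM => //; exact: int_spmx.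
- move=> k k1 kl hk; apply: (hmin k k1 kl).
  have hS : spmx p *m (spmx p)^T = 1%:M by apply: mulmx1C; exact: spmx_orth.
  have -> : k%:R *: Q = (k%:R *: (Q *m spmx p)) *m (spmx p)^T.
    by rewrite -scalemxAl -mulmxA hS mulmx1.
  apply: int_mxM => //; apply: int_mx_tr; exact: int_spmx.
Qed.

Lemma int_sp n (Q M : 'M[rat]_n) (p : spT n) : int_mx (Q^T *m M *m Q) ->
  int_mx ((Q *m spmx p)^T *m M *m (Q *m spmx p)).
Proof.
move=> h; rewrite trmx_mul.
have -> : (spmx p)^T *m Q^T *m M *m (Q *m spmx p) = (spmx p)^T *m (Q^T *m M *m Q) *m spmx p.
  by rewrite !mulmxA.
apply: int_mxM; [apply: int_mxM => //|]; [apply: int_mx_tr|]; exact: int_spmx.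
Qed.

Lemma Nn_ge (R : realType) n l (X : 'M[int]_n) (Q : 'M[rat]_n) :
  On n l Q -> int_mx (Q^T *m ratmx X *m Q) ->
  (((2 ^ n * n`!)%:R : R)%:E <= Nn R n l X)%E.
Proof.
move=> hO hI; rewrite /Nn; apply: esum_ge.
exists ((fun p : spT n => Q *m spmx p) @` setT).
  split; first exact: finite_image.
  by move=> _ [p _ <-]; split; [exact: On_sp|exact: int_sp].
have hinj : set_inj setT (fun p : spT n => Q *m spmx p).
  move=> p1 p2 _ _ /(congr1 (mulmx Q^T)); rewrite !mulmxA.
  by case: hO => -> _; rewrite !mul1mx => /spmx_inj.
rewrite fsbig_image //.
have -> : [set: spT n] = [set` enum (spT n)].
  by apply/seteqP; split => x //= _; rewrite mem_enum.
rewrite -fsbig_seq ?enum_uniq // -card_sp cardE.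
rewrite sumEFin.
by rewrite big_const_seq count_predT iter_addr addr0.
Qed.

Lemma meas_X (d : measure_display) (T : measurableType d) n (X : T -> 'M[int]_n)
  (hX : forall M : 'M[int]_n, measurable (X @^-1` [set M])) (A : set 'M[int]_n) :
  measurable (X @^-1` A).
Proof.
have -> : X @^-1` A = \bigcup_(k in [set k | exists2 M, A M & k = pickle M])
    (fun k => if unpickle k is Some M then X @^-1` [set M] else set0) k.
  apply/seteqP; split => w /=.
  - move=> Aw; exists (pickle (X w)); first by exists (X w).
    by rewrite pickleK.
  - by move=> [k [M AM ->]]; rewrite pickleK /= => ->.
apply: bigcup_measurable => k [M _ ->]; rewrite pickleK; exact: hX.
Qed.
Arguments meas_X {d T n X} hX A.

Lemma measf_X (R : realType) (d : measure_display) (T : measurableType d) n (X : T -> 'M[int]_n)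
  (hX : forall M : 'M[int]_n, measurable (X @^-1` [set M])) (g : 'M[int]_n -> \bar R) :
  measurable_fun [set: T] (g \o X).
Proof.
move=> _ Y _; rewrite setTI.
by have := meas_X hX (g @^-1` Y).
Qed.
Arguments measf_X {R d T n X} hX g.

Theorem lemma3p6 (R : realType) (d : measure_display) (T : measurableType d)
  (P : probability T R) (n L : nat) (hn : (1 <= n)%N) (hL : (1 <= L)%N)
  (X : T -> 'M[int]_n)
  (hX : forall M : 'M[int]_n, measurable (X @^-1` [set M])) :
  (P [set w | exists l : nat, (2 <= l <= L)%N /\
       exists Q : 'M[rat]_n, On n l Q /\ int_mx (Q^T *m ratmx (X w) *m Q)]
   <= ((2 ^ n * n`!)%:R^-1 : R)%:E *
      \sum_(2 <= l < L.+1) \int[P]_w (Nn R n l (X w)))%E.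
Proof.
set E := [set w | _].
have mE : measurable E.
  exact: (meas_X hX [set M | exists l : nat, (2 <= l <= L)%N /\
       exists Q : 'M[rat]_n, On n l Q /\ int_mx (Q^T *m ratmx M *m Q)]).
have N0 : forall l M, (0 <= Nn R n l M)%E by move=> l M; apply: esum_ge0.
have K0 : (0 < (2 ^ n * n`!)%:R :> R).
  by rewrite ltr0n muln_gt0 expn_gt0 fact_gt0.
rewrite -(@ge0_integral_sum _ _ _ P setT measurableT _ (fun l w => Nn R n l (X w))) //; last first.
  by move=> l; apply: (measf_X hX (fun M => Nn R n l M)).
rewrite -ge0_integralZl_EFin //; last 2 first.
- by move=> w _; apply: sume_ge0 => l _.
- exact: (measf_X hX (fun M => \sum_(2 <= l < L.+1) Nn R n l M)%E).
have -> : P E = (\int[P]_w (\1_E w)%:E)%E by rewrite integral_indic // setIT.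
apply: ge0_le_integral => //.
- apply/measurable_EFinP; exact: measurable_indic.
- exact: (measf_X hX (fun M => (((2 ^ n * n`!)%:R^-1 : R)%:E * \sum_(2 <= l < L.+1) Nn R n l M))%E).
move=> w _; rewrite indicE; case: (boolP (w \in E)) => [|_]; last first.
  by rewrite /= mule_ge0 // ?sume_ge0 // lee_fin invr_ge0 ltW.
move=> /set_mem -[l [hl [Q [hO hI]]]].
apply: (@le_trans _ _ ((((2 ^ n * n`!)%:R^-1 : R)%:E * ((2 ^ n * n`!)%:R : R)%:E))%E).
  by rewrite -EFinM mulVf ?gt_eqF.
rewrite lee_pmul2l ?lte_fin ?invr_gt0 //.
apply: le_trans (@Nn_ge R n l (X w) Q hO hI) _.
rewrite (bigD1_seq l) /= ?mem_index_iota ?iota_uniq //.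
by rewrite leeDl // sume_ge0.
Qed.
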